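(* Let $\mathbb{K}\in\{\mathbb{R},\mathbb{C}\}$, $\star\in\{*,T\}$, $\epsilon_1,\epsilon_2\in\{1,-1\}$, and let $Q(\lambda)=\lambda^2M+\lambda D+K\in\mathbb{K}^{n\times n}[\lambda]$ satisfy $M^\star=\epsilon_1M$, $D^\star=\epsilon_2D$, $K^\star=\epsilon_1K$. Let $(X,\Lambda)\in\mathbb{K}^{n\times p}\times\mathbb{K}^{p\times p}$ be an invariant pair of $Q(\lambda)$ and $S:=X^\star MX\Lambda+\epsilon_1\epsilon_2\Lambda^\star X^\star MX+X^\star DX$. Then $S^\star=\epsilon_2S$ and $S\Lambda=\epsilon_1\epsilon_2\Lambda^\star S=\epsilon_1(S\Lambda)^\star$.
   Context: For a matrix $A$, $A^*$ is the conjugate transpose and $A^T$ the transpose; $A^\star$ means $A^*$ if $\star=*$ and $A^T$ if $\star=T$. A pair $(X,\Lambda)$ is an invariant pair of $Q(\lambda)$ if $MX\Lambda^2+DX\Lambda+KX=0$. *)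

(* Defs.v *)
From HB Require Import structures.
From mathcomp Require Import all_boot all_order all_algebra.
From mathcomp Require Import complex.
Set Implicit Arguments. Unset Strict Implicit. Unset Printing Implicit Defensive.
Import Order.TTheory GRing.Theory Num.Theory.
Local Open Scope ring_scope.

Inductive star_kind := StarConj | StarTr.

(* A^star for a matrix over a ring K equipped with the conjugation [conj]
   ([conj] = id for K = R, [conj] = complex conjugation for K = R[i]). *)
Definition mxstar (K : Type) (conj : K -> K) (s : star_kind) (m n : nat)
  (A : 'M[K]_(m, n)) : 'M[K]_(n, m) :=
  match s with
  | StarConj => map_mx conj A^T
  | StarTr => A^T
  end.

Definition invariant_pair (K : pzRingType) (n p : nat)
  (M D Kc : 'M[K]_n) (X : 'M[K]_(n, p)) (L : 'M[K]_p) : Prop :=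
  M *m X *m (L *m L) + D *m X *m L + Kc *m X = 0.

Definition Smx (K : pzRingType) (conj : K -> K) (s : star_kind) (e1 e2 : K)
  (n p : nat) (M D : 'M[K]_n) (X : 'M[K]_(n, p)) (L : 'M[K]_p) : 'M[K]_p :=
  mxstar conj s X *m M *m X *m L
  + (e1 * e2) *: (mxstar conj s L *m mxstar conj s X *m M *m X)
  + mxstar conj s X *m D *m X.

(* Main.v *)
Require Import Defs.
From HB Require Import structures.
From mathcomp Require Import all_boot all_order all_algebra.
From mathcomp Require Import complex.
Import Order.TTheory GRing.Theory Num.Theory.
Local Open Scope ring_scope.

Section G.
Variable K : comPzRingType.
Variable conj : K -> K.
Hypothesis cD : forall a b, conj (a + b) = conj a + conj b.
Hypothesis cM : forall a b, conj (a * b) = conj a * conj b.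
Hypothesis cK : forall a, conj (conj a) = a.
Lemma c0 : conj 0 = 0.
Proof. have := cD 0 0; rewrite addr0 -{1}[conj 0]addr0 => /addrI //. Qed.

Lemma csum I (r : seq I) P (F : I -> K) : conj (\sum_(i <- r | P i) F i) = \sum_(i <- r | P i) conj (F i).
Proof. exact: (big_morph _ cD c0). Qed.

Lemma mxstarM s m n k (A : 'M[K]_(m,n)) (B : 'M[K]_(n,k)) :
  mxstar conj s (A *m B) = mxstar conj s B *m mxstar conj s A.
Proof.
case: s => /=; last exact: trmx_mul.
apply/matrixP => i j; rewrite !mxE csum; apply: eq_bigr => l _.
by rewrite !mxE cM mulrC.
Qed.

Lemma mxstarD s m n (A B : 'M[K]_(m,n)) :
  mxstar conj s (A + B) = mxstar conj s A + mxstar conj s B.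
Proof. case: s => /=; last exact: linearD.
by apply/matrixP => i j; rewrite !mxE cD. Qed.

Lemma mxstarZ s m n a (A : 'M[K]_(m,n)) : conj a = a ->
  mxstar conj s (a *: A) = a *: mxstar conj s A.
Proof. move=> ca; case: s => /=; last exact: linearZ.
by apply/matrixP => i j; rewrite !mxE cM ca. Qed.

Lemma mxstarK s m n (A : 'M[K]_(m,n)) : mxstar conj s (mxstar conj s A) = A.
Proof. case: s => /=; last exact: trmxK.
by apply/matrixP => i j; rewrite !mxE cK. Qed.

Lemma mxstar0 s m n : mxstar conj s (0 : 'M[K]_(m,n)) = 0.
Proof. by have := @mxstarZ s m n 0 0 c0; rewrite !scale0r. Qed.

Lemma gen s (e1 e2 : K) n p (M D Kc : 'M[K]_n) (X : 'M[K]_(n, p)) (L : 'M[K]_p) :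
     (e1 = 1 \/ e1 = -1) -> (e2 = 1 \/ e2 = -1) ->
     mxstar conj s M = e1 *: M -> mxstar conj s D = e2 *: D ->
     mxstar conj s Kc = e1 *: Kc ->
     invariant_pair M D Kc X L ->
     let S := Smx conj s e1 e2 M D X L in
     mxstar conj s S = e2 *: S /\
     S *m L = (e1 * e2) *: (mxstar conj s L *m S) /\
     (e1 * e2) *: (mxstar conj s L *m S) = e1 *: mxstar conj s (S *m L).
Proof.
have c1 : conj 1 = 1.
  by have := cM 1 (conj 1); rewrite mul1r cK mulr1.
have cN : forall a, conj (- a) = - conj a.
  by move=> a; apply/eqP; rewrite -subr_eq0 opprK -cD addNr c0.
move=> h1 h2 sM sD sK inv S.
have ce1 : conj e1 = e1 by case: h1 => ->; rewrite ?cN c1.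
have ce2 : conj e2 = e2 by case: h2 => ->; rewrite ?cN c1.
have ee1 : e1 * e1 = 1 by case: h1 => ->; rewrite ?mulrNN mulr1.
have ee2 : e2 * e2 = 1 by case: h2 => ->; rewrite ?mulrNN mulr1.
pose A := mxstar conj s X *m M *m X.
pose B := mxstar conj s X *m D *m X.
pose C := mxstar conj s X *m Kc *m X.
have HS : S = A *m L + (e1 * e2) *: (mxstar conj s L *m A) + B.
  by rewrite /S /Smx /A /B !mulmxA.
have H1 : A *m L *m L + B *m L + C = 0.
  have := congr1 (mulmx (mxstar conj s X)) inv; rewrite mulmx0 !mulmxDr.
  by rewrite /A /B /C !mulmxA.
have sA : mxstar conj s A = e1 *: A.
  by rewrite /A !mxstarM mxstarK sM -scalemxAl -scalemxAr mulmxA.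
have sB : mxstar conj s B = e2 *: B.
  by rewrite /B !mxstarM mxstarK sD -scalemxAl -scalemxAr mulmxA.
have sC : mxstar conj s C = e1 *: C.
  by rewrite /C !mxstarM mxstarK sK -scalemxAl -scalemxAr mulmxA.
clearbody A B C S.
set LS := mxstar conj s L.
have ce : conj (e1 * e2) = e1 * e2 by rewrite cM ce1 ce2.
have H2 : LS *m LS *m A + (e1 * e2) *: (LS *m B) + C = 0.
  have := congr1 (@mxstar K conj s p p) H1; rewrite !mxstarD !mxstarM mxstar0 sA sB sC.
  move=> /(congr1 (fun Z => e1 *: Z)); rewrite scaler0 => <-.
  rewrite -/LS -?scalemxAl -!scalemxAr !scalerDr !scalerA ee1 scale1r !mulmxA.
  by rewrite scale1r.
have ee : (e1 * e2) * (e1 * e2) = 1.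
  by rewrite mulrACA ee1 ee2 mulr1.
have eC : A *m L *m L + B *m L = - C by apply/eqP; rewrite -addr_eq0 H1.
have eC2 : LS *m LS *m A + (e1 * e2) *: (LS *m B) = - C.
  by apply/eqP; rewrite -addr_eq0 H2.
have HS' : S *m L = - C + (e1 * e2) *: (LS *m A *m L).
  by rewrite HS !mulmxDl -scalemxAl addrAC eC.
have G1 : mxstar conj s S = e2 *: S.
  rewrite HS !mxstarD (@mxstarZ s _ _ _ _ ce) !mxstarM mxstarK sA sB -/LS.
  rewrite -?scalemxAl -?scalemxAr !scalerDr !scalerA.
  rewrite mulrAC ee1 mul1r mulrCA ee2 mulr1; congr (_ + _); exact: addrC.
split => //; split.
  rewrite HS' HS !mulmxDr -!scalemxAr !scalerDr !scalerA ee scale1r mulmxA.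
  by rewrite -/LS mulmxA -addrA eC2 addrC.
rewrite mxstarM G1 -/LS -scalemxAr scalerA; congr (_ *: _).
Qed.
End G.

(* K = R (conjugation = identity) or K = R[i] (conjugation = conjc),
   for an arbitrary real closed field R (e.g. the reals). *)
Theorem corollary2p3 (R : rcfType) :
  (forall (s : star_kind) (e1 e2 : R) (n p : nat)
     (M D Kc : 'M[R]_n) (X : 'M[R]_(n, p)) (L : 'M[R]_p),
     (e1 = 1 \/ e1 = -1) -> (e2 = 1 \/ e2 = -1) ->
     mxstar id s M = e1 *: M -> mxstar id s D = e2 *: D ->
     mxstar id s Kc = e1 *: Kc ->
     invariant_pair M D Kc X L ->
     let S := Smx id s e1 e2 M D X L in
     mxstar id s S = e2 *: S /\
     S *m L = (e1 * e2) *: (mxstar id s L *m S) /\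
     (e1 * e2) *: (mxstar id s L *m S) = e1 *: mxstar id s (S *m L))
  /\
  (forall (s : star_kind) (e1 e2 : R[i]) (n p : nat)
     (M D Kc : 'M[R[i]]_n) (X : 'M[R[i]]_(n, p)) (L : 'M[R[i]]_p),
     (e1 = 1 \/ e1 = -1) -> (e2 = 1 \/ e2 = -1) ->
     mxstar conjc s M = e1 *: M -> mxstar conjc s D = e2 *: D ->
     mxstar conjc s Kc = e1 *: Kc ->
     invariant_pair M D Kc X L ->
     let S := Smx conjc s e1 e2 M D X L in
     mxstar conjc s S = e2 *: S /\
     S *m L = (e1 * e2) *: (mxstar conjc s L *m S) /\
     (e1 * e2) *: (mxstar conjc s L *m S) = e1 *: mxstar conjc s (S *m L)).
Proof.
split=> s e1 e2 n p M D Kc X L h1 h2 h3 h4 h5 h6.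
  exact: (@gen R id (fun _ _ => erefl) (fun _ _ => erefl) (fun _ => erefl)
            s e1 e2 n p M D Kc X L h1 h2 h3 h4 h5 h6).
have cD : forall a b : R[i], conjc (a + b) = conjc a + conjc b by move=> a b; rewrite rmorphD.
have cM : forall a b : R[i], conjc (a * b) = conjc a * conjc b by move=> a b; rewrite rmorphM.
have cK : forall a : R[i], conjc (conjc a) = a by move=> a; rewrite conjcK.
exact: (@gen _ conjc cD cM cK s e1 e2 n p M D Kc X L h1 h2 h3 h4 h5 h6).
Qed.
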